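(* Let $G$ be the graph defined below. An order automorphism of $\mathbb Q$ is a bijection $\gamma\colon\mathbb Q\to\mathbb Q$ with $q<r \iff \gamma(q)<\gamma(r)$. For such $\gamma$ define $\gamma_\uparrow, \gamma_\downarrow\colon V\to V$ by $\gamma_\uparrow(q^+)=(\gamma(q))^+$, $\gamma_\uparrow(q^-)=(\gamma(q))^-$, $\gamma_\downarrow(q^+)=(-\gamma(q))^-$, $\gamma_\downarrow(q^-)=(-\gamma(q))^+$. Then every $\gamma_\uparrow$ and every $\gamma_\downarrow$ is an automorphism of $G$, and conversely every automorphism of $G$ equals $\gamma_\uparrow$ or $\gamma_\downarrow$ for some order automorphism $\gamma$ of $\mathbb Q$.
   Context: Let $\mathbb Q^+=\{q^+: q\in\mathbb Q\}$ and $\mathbb Q^-=\{q^-: q\in\mathbb Q\}$ be two disjoint copies of $\mathbb Q$. $G$ is the simple undirected graph with vertex set $V=\mathbb Q^+\cup\mathbb Q^-$ in which the edges are exactly the pairs $\{q^+,r^-\}$ with $q,r\in\mathbb Q$ and $q<r$ (there are no edges inside $\mathbb Q^+$ or inside $\mathbb Q^-$). *)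

(* Defs.v *)
From HB Require Import structures.
From mathcomp Require Import all_boot all_order all_algebra.
Set Implicit Arguments. Unset Strict Implicit. Unset Printing Implicit Defensive.
Import Order.TTheory GRing.Theory Num.Theory.
Local Open Scope ring_scope.

(* Vertex type V = Q^+ ∪ Q^-.  Vplus q = q^+, Vminus q = q^-. *)
Inductive V : Type := Vplus of rat | Vminus of rat.

Definition Gadj (x y : V) : Prop :=
  match x, y with
  | Vplus q, Vminus r => q < r
  | Vminus r, Vplus q => q < r
  | _, _ => False
  end.

Definition order_automorphism (g : rat -> rat) : Prop :=
  bijective g /\ forall q r : rat, q < r <-> g q < g r.

Definition graph_automorphism (f : V -> V) : Prop :=
  bijective f /\ forall x y : V, Gadj x y <-> Gadj (f x) (f y).

Definition gamma_up (g : rat -> rat) (x : V) : V :=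
  match x with
  | Vplus q => Vplus (g q)
  | Vminus q => Vminus (g q)
  end.

Definition gamma_down (g : rat -> rat) (x : V) : V :=
  match x with
  | Vplus q => Vminus (- g q)
  | Vminus q => Vplus (- g q)
  end.

(* Main.v *)
Require Import Defs.
From HB Require Import structures.
From mathcomp Require Import all_boot all_order all_algebra.
From Stdlib Require Import FunctionalExtensionality.
Import Order.TTheory GRing.Theory Num.Theory.
Local Open Scope ring_scope.

Definition isp (x : V) : bool := if x is Vplus _ then true else false.
Definition vr (x : V) : rat := match x with Vplus q => q | Vminus q => q end.

Lemma mono_rev (F : rat -> rat) : (forall a b, a < b -> F a < F b) ->
  forall a b, F a < F b -> a < b.
Proof.
move=> FM a b H; case: (ltgtP a b) => // [hba|hab].
  by move: (FM _ _ hba) => H2; move: (lt_trans H H2); rewrite ltxx.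
by move: H; rewrite hab ltxx.
Qed.

Lemma core (g h : rat -> rat) : (forall y, exists q, g q = y) ->
  (forall y, exists q, h q = y) -> (forall q r, q < r <-> g q < h r) ->
  g =1 h /\ order_automorphism g.
Proof.
move=> gS hS H.
have A : forall q, h q <= g q.
  move=> q; rewrite leNgt; apply/negP => Hq.
  have [m1 m2] := midf_lt Hq.
  have [r Hr] := hS ((g q + h q) / 2).
  have [q' Hq'] := gS ((g q + h q) / 2).
  have qr : q < r by apply/H; rewrite Hr.
  have q'q : q' < q by apply/H; rewrite Hq'.
  have := proj1 (H q' r) (lt_trans q'q qr).
  by rewrite Hr Hq' ltxx.
have gM : forall a b, a < b -> g a < g b.
  by move=> a b /H hab; apply: (lt_le_trans hab (A b)).
have hM : forall a b, a < b -> h a < h b.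
  by move=> a b /H hab; apply: (le_lt_trans (A a) hab).
have E : g =1 h.
  move=> q; apply/eqP; rewrite eq_le A andbT leNgt; apply/negP => Hq.
  have [m1 m2] := midf_lt Hq.
  have [r Hr] := hS ((h q + g q) / 2).
  have [q' Hq'] := gS ((h q + g q) / 2).
  have qr : q < r by apply: (@mono_rev h hM q r); rewrite Hr.
  have q'q : q' < q by apply: (@mono_rev g gM q' q); rewrite Hq'.
  have := proj1 (H q' r) (lt_trans q'q qr).
  by rewrite Hr Hq' ltxx.
split=> //; split; last first.
  by move=> q r; split; [apply: gM | apply: (@mono_rev g gM)].
have gS' : forall y, exists q, g q == y by move=> y; have [q <-] := gS y; exists q.
have ginj : injective g.
  move=> a b hab; case: (ltgtP a b) => // hh.
    by move: (gM _ _ hh); rewrite hab ltxx.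
  by move: (gM _ _ hh); rewrite hab ltxx.
exists (fun y => xchoose (gS' y)).
  by move=> q; apply: ginj; apply/eqP; exact: (xchooseP (gS' (g q))).
by move=> y; apply/eqP; exact: (xchooseP (gS' y)).
Qed.

Lemma cn_iff x y : (exists z, Gadj x z /\ Gadj y z) <-> isp x = isp y.
Proof.
split.
  by case=> z []; case: x => ?; case: y => ?; case: z => ? //=.
case: x => q; case: y => r //= _.
  exists (Vminus (Num.max q r + 1)); split=> /=.
    have h1 : q <= Num.max q r by rewrite le_max lexx.
    by apply: (le_lt_trans h1); rewrite ltrDl ltr01.
  have h1 : r <= Num.max q r by rewrite le_max lexx orbT.
  by apply: (le_lt_trans h1); rewrite ltrDl ltr01.
exists (Vplus (Num.min q r - 1)); split=> /=.
  have h1 : Num.min q r <= q by rewrite ge_min lexx.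
  by apply: (lt_le_trans _ h1); rewrite gtrDl oppr_lt0 ltr01.
have h1 : Num.min q r <= r by rewrite ge_min lexx orbT.
by apply: (lt_le_trans _ h1); rewrite gtrDl oppr_lt0 ltr01.
Qed.

Theorem mainTheorem2 :
  (forall g : rat -> rat, order_automorphism g ->
     graph_automorphism (gamma_up g) /\ graph_automorphism (gamma_down g)) /\
  (forall f : V -> V, graph_automorphism f ->
     exists g : rat -> rat, order_automorphism g /\
       (f = gamma_up g \/ f = gamma_down g)).
Proof.
split.
  move=> g [[ginv gK gKi] Hg]; split; split.
  - by exists (gamma_up ginv); case=> q /=; rewrite ?gK ?gKi.
  - by case=> q; case=> r //=; apply: Hg.
  - exists (fun x => match x with Vplus q => Vminus (ginv (- q))
                    | Vminus q => Vplus (ginv (- q)) end).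
      by case=> q /=; rewrite opprK gK.
    by case=> q /=; rewrite gKi opprK.
  - by case=> q; case=> r //=; rewrite ltrN2; apply: Hg.
move=> f [[finv fK fKi] Hf].
have fisp : forall x y, isp (f x) = isp (f y) <-> isp x = isp y.
  move=> x y; split.
    move/cn_iff=> [z [H1 H2]]; apply/cn_iff; exists (finv z); split; apply/Hf; by rewrite fKi.
  move/(proj2 (cn_iff _ _))=> [z [H1 H2]]; apply: (proj1 (cn_iff _ _)); exists (f z); split; exact: (proj1 (Hf _ _)).
case Hb: (isp (f (Vplus 0))).
  have sideP : forall x, isp (f x) = isp x.
    move=> x; have := fisp x (Vplus 0); rewrite Hb /=.
    by case: (isp (f x)); case: (isp x); intuition.
  pose g q := vr (f (Vplus q)); pose h q := vr (f (Vminus q)).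
  have fP q : f (Vplus q) = Vplus (g q).
    by have := sideP (Vplus q); rewrite /g; case: (f (Vplus q)).
  have fM q : f (Vminus q) = Vminus (h q).
    by have := sideP (Vminus q); rewrite /h; case: (f (Vminus q)).
  have [E Og] : g =1 h /\ order_automorphism g.
    apply: core.
    - move=> y; have := sideP (finv (Vplus y)); rewrite fKi /=.
      case E: (finv (Vplus y)) => [q|q] //= _; exists q.
      by rewrite /g -E fKi.
    - move=> y; have := sideP (finv (Vminus y)); rewrite fKi /=.
      case E: (finv (Vminus y)) => [q|q] //= _; exists q.
      by rewrite /h -E fKi.
    - by move=> q r; have := Hf (Vplus q) (Vminus r); rewrite fP fM.
  exists g; split=> //; left; apply: functional_extensionality; case=> q /=.
    by rewrite fP.
  by rewrite fM E.
have sideP : forall x, isp (f x) = ~~ isp x.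
  move=> x; have := fisp x (Vplus 0); rewrite Hb /=.
  by case: (isp (f x)); case: (isp x); intuition.
pose g q := - vr (f (Vplus q)); pose h q := - vr (f (Vminus q)).
have fP q : f (Vplus q) = Vminus (- g q).
  by have := sideP (Vplus q); rewrite /g opprK; case: (f (Vplus q)).
have fM q : f (Vminus q) = Vplus (- h q).
  by have := sideP (Vminus q); rewrite /h opprK; case: (f (Vminus q)).
have [E Og] : g =1 h /\ order_automorphism g.
  apply: core.
  - move=> y; have := sideP (finv (Vminus (- y))); rewrite fKi /=.
    case E: (finv (Vminus (- y))) => [q|q] //= _; exists q.
    by rewrite /g -E fKi /= opprK.
  - move=> y; have := sideP (finv (Vplus (- y))); rewrite fKi /=.
    case E: (finv (Vplus (- y))) => [q|q] //= _; exists q.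
    by rewrite /h -E fKi /= opprK.
  - by move=> q r; have := Hf (Vplus q) (Vminus r); rewrite fP fM /= ltrN2.
exists g; split=> //; right; apply: functional_extensionality; case=> q /=.
  by rewrite fP.
by rewrite fM E.
Qed.
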